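(* For all nonnegative integers $n$ and $k$, $$W_{m,r}[n,k]_q=\frac{1}{[k]_{q^m}!\,[m]_q^{k}}\sum_{j=0}^{k}(-1)^{k-j}\,q^{m\binom{k-j}{2}}\begin{bmatrix}k\\ j\end{bmatrix}_{q^m}[jm+r]_q^{\,n}.$$
   Context: Fix a real number $q>0$ with $q\neq 1$, a positive integer $m$ and a complex number $r$. For complex $x$ put $q^x=e^{x\ln q}$ and $[x]_q=\frac{1-q^x}{1-q}$. For $p>0$, $p\ne 1$ and integers $0\le j\le k$: $[i]_p=\frac{1-p^i}{1-p}$, $[k]_p!=\prod_{i=1}^{k}[i]_p$ (with $[0]_p!=1$), and $\begin{bmatrix}k\\ j\end{bmatrix}_p=\frac{[k]_p!}{[j]_p!\,[k-j]_p!}$. The numbers $W_{m,r}[n,k]_q$ (a $q$-analogue of the $r$-Whitney numbers of the second kind), for integers $n,k$, are defined by $W_{m,r}[0,0]_q=1$, $W_{m,r}[n,k]_q=0$ whenever $n<k$ or $n<0$ or $k<0$, and, for $n\ge 1$ and $0\le k\le n$, $$W_{m,r}[n,k]_q=q^{m(k-1)+r}\,W_{m,r}[n-1,k-1]_q+[mk+r]_q\,W_{m,r}[n-1,k]_q .$$ *)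

(* Defs.v *)
From Stdlib Require Import Reals Lra Lia List.
Open Scope R_scope.

Definition Cplx : Type := (R * R)%type.
Definition RtoC (x : R) : Cplx := (x, 0).
Definition C0 : Cplx := (0, 0).
Definition C1 : Cplx := (1, 0).
Definition Cadd (z w : Cplx) : Cplx := (fst z + fst w, snd z + snd w).
Definition Copp (z : Cplx) : Cplx := (- fst z, - snd z).
Definition Csub (z w : Cplx) : Cplx := Cadd z (Copp w).
Definition Cmul (z w : Cplx) : Cplx :=
  (fst z * fst w - snd z * snd w, fst z * snd w + snd z * fst w).
Definition Cinv (z : Cplx) : Cplx :=
  let d := fst z * fst z + snd z * snd z in (fst z / d, - snd z / d).
Definition Cdiv (z w : Cplx) : Cplx := Cmul z (Cinv w).
Definition Cexp (z : Cplx) : Cplx := (exp (fst z) * cos (snd z), exp (fst z) * sin (snd z)).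
Fixpoint Cpow (z : Cplx) (n : nat) : Cplx :=
  match n with O => C1 | S n' => Cmul z (Cpow z n') end.
Definition Csum_upto (k : nat) (f : nat -> Cplx) : Cplx :=
  fold_right Cadd C0 (map f (seq 0 (S k))).

Definition qpow (q : R) (x : Cplx) : Cplx := Cexp (Cmul (RtoC (ln q)) x).
Definition qnumC (q : R) (x : Cplx) : Cplx :=
  Cdiv (Csub C1 (qpow q x)) (RtoC (1 - q)).

Definition qint (p : R) (i : nat) : R := (1 - p ^ i) / (1 - p).
Fixpoint qfact (p : R) (k : nat) : R :=
  match k with O => 1 | S k' => qfact p k' * qint p (S k') end.
Definition qbinom (p : R) (k j : nat) : R :=
  qfact p k / (qfact p j * qfact p (k - j)).

Fixpoint binom (n k : nat) : nat :=
  match n, k with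
  | _, O => 1%nat
  | O, S _ => 0%nat
  | S n', S k' => (binom n' k' + binom n' (S k'))%nat
  end.

Fixpoint W (q : R) (m : nat) (r : Cplx) (n k : nat) : Cplx :=
  if Nat.ltb n k then C0 else
  match n with
  | O => C1   (* here k = 0 *)
  | S n' =>
    match k with
    | O => Cmul (qnumC q r) (W q m r n' O)
           (* the term with W[n-1,-1] vanishes *)
    | S k' =>
      Cadd (Cmul (qpow q (Cadd (RtoC (INR (m * k'))) r)) (W q m r n' k'))
           (Cmul (qnumC q (Cadd (RtoC (INR (m * k))) r)) (W q m r n' k))
    end
  end.

(* Main.v *)
Require Import Defs.
From Stdlib Require Import Reals List Lra Lia Ring Field.
Open Scope R_scope.
Require Import Defs.

Lemma Cring : ring_theory C0 C1 Cadd Cmul Csub Copp (@eq Cplx).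
Proof.
  constructor; intros;
  repeat match goal with z : Cplx |- _ => destruct z end;
  unfold Csub, C0, C1, Cadd, Cmul, Copp; simpl; apply pair_equal_spec; split; ring.
Qed.
Add Ring CplxRing : Cring.

Lemma RtoC_mul a b : RtoC (a * b) = Cmul (RtoC a) (RtoC b).
Proof. unfold RtoC, Cmul; simpl; apply pair_equal_spec; split; ring. Qed.
Lemma RtoC_sub a b : RtoC (a - b) = Csub (RtoC a) (RtoC b).
Proof. unfold RtoC, Csub, Cadd, Copp; simpl; apply pair_equal_spec; split; ring. Qed.
Lemma RtoC_add a b : RtoC (a + b) = Cadd (RtoC a) (RtoC b).
Proof. unfold RtoC, Cadd; simpl; apply pair_equal_spec; split; ring. Qed.
Lemma RtoC_1 : RtoC 1 = C1. Proof. reflexivity. Qed.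
Lemma RtoC_0 : RtoC 0 = C0. Proof. reflexivity. Qed.

Fixpoint rs (k : nat) (f : nat -> Cplx) : Cplx :=
  match k with O => f O | S k' => Cadd (rs k' f) (f (S k')) end.
Fixpoint rsR (k : nat) (f : nat -> R) : R :=
  match k with O => f O | S k' => rsR k' f + f (S k') end.

Lemma fold_seq f : forall len s, fold_right Cadd C0 (map f (seq s (S len))) =
  Cadd (fold_right Cadd C0 (map f (seq s len))) (f (s + len)%nat).
Proof.
  induction len; intros s.
  - simpl. rewrite Nat.add_0_r. ring.
  - change (seq s (S (S len))) with (s :: seq (S s) (S len)).
    change (seq s (S len)) with (s :: seq (S s) len).
    change (fold_right Cadd C0 (map f (s :: seq (S s) (S len)))) with
      (Cadd (f s) (fold_right Cadd C0 (map f (seq (S s) (S len))))).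
    change (fold_right Cadd C0 (map f (s :: seq (S s) len))) with
      (Cadd (f s) (fold_right Cadd C0 (map f (seq (S s) len)))).
    rewrite IHlen.
    replace (S s + len)%nat with (s + S len)%nat by lia. ring.
Qed.

Lemma Csum_rs k f : Csum_upto k f = rs k f.
Proof.
  induction k.
  - unfold Csum_upto; simpl; ring.
  - unfold Csum_upto in *. rewrite fold_seq. simpl rs. rewrite <- IHk. reflexivity.
Qed.

Lemma rs_ext k f g : (forall j, (j <= k)%nat -> f j = g j) -> rs k f = rs k g.
Proof.
  induction k; intros H; simpl.
  - apply H; lia.
  - rewrite IHk by (intros; apply H; lia). rewrite H by lia. reflexivity.
Qed.
Lemma rsR_ext k f g : (forall j, (j <= k)%nat -> f j = g j) -> rsR k f = rsR k g.
Proof.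
  induction k; intros H; simpl.
  - apply H; lia.
  - rewrite IHk by (intros; apply H; lia). rewrite H by lia. reflexivity.
Qed.
Lemma rs_add k f g : rs k (fun j => Cadd (f j) (g j)) = Cadd (rs k f) (rs k g).
Proof. induction k; simpl; [ring| rewrite IHk; ring]. Qed.
Lemma rs_scal k a f : rs k (fun j => Cmul a (f j)) = Cmul a (rs k f).
Proof. induction k; simpl; [ring| rewrite IHk; ring]. Qed.
Lemma rs_RtoC k g : rs k (fun j => RtoC (g j)) = RtoC (rsR k g).
Proof. induction k; simpl; [reflexivity| rewrite IHk, RtoC_add; reflexivity]. Qed.
Lemma rsR_scal k a f : rsR k (fun j => a * f j) = a * rsR k f.
Proof. induction k; simpl; [ring| rewrite IHk; ring]. Qed.
Lemma rsR_tele a n : rsR n (fun j => a j - match j with O => 0 | S i => a i end) = a n.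
Proof. induction n; simpl; [ring| rewrite IHn; ring]. Qed.

Lemma qpow_shift q a r : 0 < q ->
  qpow q (Cadd (RtoC (INR a)) r) = Cmul (RtoC (q ^ a)) (qpow q r).
Proof.
  intros hq. destruct r as [r1 r2].
  unfold qpow, Cexp, Cmul, Cadd, RtoC; simpl.
  replace (ln q * (INR a + r1) - 0 * (0 + r2)) with (INR a * ln q + (ln q * r1 - 0 * r2)) by ring.
  replace (ln q * (0 + r2) + 0 * (INR a + r1)) with (ln q * r2 + 0 * r1) by ring.
  rewrite exp_plus. replace (exp (INR a * ln q)) with (q ^ a).
  2:{ rewrite <- Rpower_pow by exact hq. reflexivity. }
  f_equal; ring.
Qed.

Lemma Cdiv_RtoC w d : d <> 0 -> Cdiv w (RtoC d) = Cmul (RtoC (1 / d)) w.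
Proof.
  intros hd. destruct w as [a b]. unfold Cdiv, Cinv, Cmul, RtoC; simpl.
  f_equal; field; auto.
Qed.

Lemma qnum_shift q a r : 0 < q -> q <> 1 ->
  qnumC q (Cadd (RtoC (INR a)) r) =
  Cmul (RtoC (1 / (1 - q))) (Csub C1 (Cmul (RtoC (q ^ a)) (qpow q r))).
Proof.
  intros hq hq1. unfold qnumC. rewrite Cdiv_RtoC by lra. rewrite qpow_shift by auto. reflexivity.
Qed.

Lemma pow_ne1 x n : 0 < x -> x <> 1 -> (0 < n)%nat -> x ^ n <> 1.
Proof.
  intros hx hx1 hn. destruct (Rlt_or_le x 1) as [h|h].
  - pose proof (pow_lt_1_compat x n (conj (Rlt_le _ _ hx) h) hn). lra.
  - assert (1 < x) by lra. pose proof (Rlt_pow_R1 x n H hn). lra.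
Qed.

Lemma binom_0 n : binom n 0 = 1%nat. Proof. destruct n; reflexivity. Qed.
Lemma binom_1 n : binom n 1 = n. Proof. induction n; simpl; [reflexivity| rewrite binom_0, IHn; lia]. Qed.
Lemma binom_S2 d : binom (S d) 2 = (binom d 2 + d)%nat.
Proof. simpl. rewrite binom_1. lia. Qed.

Lemma qint_nz p i : 0 < p -> p <> 1 -> (0 < i)%nat -> qint p i <> 0.
Proof.
  intros hp hp1 hi. unfold qint. pose proof (pow_ne1 p i hp hp1 hi).
  apply Rmult_integral_contrapositive_currified; [lra|].
  apply Rinv_neq_0_compat; lra.
Qed.
Lemma qfact_nz p k : 0 < p -> p <> 1 -> qfact p k <> 0.
Proof.
  intros hp hp1. induction k; simpl; [lra|].
  apply Rmult_integral_contrapositive_currified; auto. apply qint_nz; auto; lia.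
Qed.

Definition cc q m k j := 1 / (qfact (q ^ m) k * qint q m ^ k) *
  ((-1) ^ (k - j) * q ^ (m * binom (k - j) 2) * qbinom (q ^ m) k j).

Lemma powm q a m : q ^ (a * m) = (q ^ m) ^ a.
Proof. rewrite Nat.mul_comm, pow_mult. reflexivity. Qed.

Lemma key_real q m j d : 0 < q -> q <> 1 -> (0 < m)%nat ->
  1 / (1 - q) * cc q m (S (j + d)) j * (q ^ (S (j + d) * m) - q ^ (j * m)) =
  q ^ (m * (j + d)) * cc q m (j + d) j.
Proof.
  intros hq hq1 hm.
  assert (hP : 0 < q ^ m) by (apply pow_lt; lra).
  assert (hP1 : q ^ m <> 1) by (apply pow_ne1; auto).
  unfold cc, qbinom.
  replace (S (j + d) - j)%nat with (S d) by lia.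
  replace (j + d - j)%nat with d by lia.
  rewrite binom_S2.
  change (qfact (q ^ m) (S (j + d))) with (qfact (q ^ m) (j + d) * qint (q ^ m) (S (j + d))).
  change (qfact (q ^ m) (S d)) with (qfact (q ^ m) d * qint (q ^ m) (S d)).
  rewrite (powm q (S (j+d)) m), (powm q j m), !pow_mult, !pow_add.
  rewrite <- !tech_pow_Rmult.
  pose proof (qfact_nz (q^m) (j+d) hP hP1).
  pose proof (qfact_nz (q^m) d hP hP1).
  pose proof (qfact_nz (q^m) j hP hP1).
  pose proof (pow_ne1 (q^m) (S (j+d)) hP hP1 ltac:(lia)).
  pose proof (pow_ne1 (q^m) (S d) hP hP1 ltac:(lia)).
  assert (hI : (1 - q ^ m) / (1 - q) <> 0).
  { apply Rmult_integral_contrapositive_currified; [lra|]. apply Rinv_neq_0_compat; lra. }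
  pose proof (pow_nonzero _ j hI). pose proof (pow_nonzero _ d hI).
  unfold qint in *.
  rewrite <- !tech_pow_Rmult, !pow_add in *.
  set (P := q ^ m) in *.
  set (Pj := P ^ j) in *. set (Pd := P ^ d) in *.
  set (Pb := P ^ binom d 2) in *. set (s := (-1) ^ d) in *.
  set (F1 := qfact P (j + d)) in *. set (Fj := qfact P j) in *. set (Fd := qfact P d) in *.
  field. repeat split; lra.
Qed.


Lemma qpascal p i d : 0 < p -> p <> 1 ->
  qbinom p (S (i + S d)) (S i) = qbinom p (i + S d) (S i) + p ^ (S d) * qbinom p (i + S d) i.
Proof.
  intros hp hp1. unfold qbinom.
  replace (S (i + S d) - S i)%nat with (S d) by lia.
  replace (i + S d - S i)%nat with d by lia.
  replace (i + S d - i)%nat with (S d) by lia.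
  change (qfact p (S (i + S d))) with (qfact p (i + S d) * qint p (S (i + S d))).
  change (qfact p (S i)) with (qfact p i * qint p (S i)).
  change (qfact p (S d)) with (qfact p d * qint p (S d)).
  pose proof (qfact_nz p (i + S d) hp hp1).
  pose proof (qfact_nz p i hp hp1).
  pose proof (qfact_nz p d hp hp1).
  pose proof (pow_ne1 p (S i) hp hp1 ltac:(lia)).
  pose proof (pow_ne1 p (S d) hp hp1 ltac:(lia)).
  unfold qint.
  replace (S (i + S d)) with (S d + S i)%nat by lia. rewrite pow_add.
  set (A := p ^ S d) in *. set (B := p ^ S i) in *.
  set (F1 := qfact p (i + S d)) in *. set (Fi := qfact p i) in *. set (Fd := qfact p d) in *.
  field. repeat split; lra.
Qed.

Lemma qbinom_n0 p n : 0 < p -> p <> 1 -> qbinom p n 0 = 1.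
Proof.
  intros hp hp1. unfold qbinom. rewrite Nat.sub_0_r. simpl qfact at 2.
  pose proof (qfact_nz p n hp hp1). field. auto.
Qed.
Lemma qbinom_nn p n : 0 < p -> p <> 1 -> qbinom p n n = 1.
Proof.
  intros hp hp1. unfold qbinom. rewrite Nat.sub_diag. simpl qfact at 3.
  pose proof (qfact_nz p n hp hp1). field. auto.
Qed.

Definition tt q m k j := (-1) ^ (k - j) * q ^ (m * binom (k - j) 2) * qbinom (q ^ m) k j.

Lemma tsum_zero q m k : 0 < q -> q <> 1 -> (0 < m)%nat -> rsR (S k) (tt q m (S k)) = 0.
Proof.
  intros hq hq1 hm.
  assert (hP : 0 < q ^ m) by (apply pow_lt; lra).
  assert (hP1 : q ^ m <> 1) by (apply pow_ne1; auto).
  set (a := fun j => if (j <=? k)%nat then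
        (-1) ^ (S k - j) * q ^ (m * binom (S k - j) 2) * qbinom (q ^ m) k j else 0).
  transitivity (rsR (S k) (fun j => a j - match j with O => 0 | S i => a i end)).
  2:{ rewrite rsR_tele. unfold a. replace (S k <=? k)%nat with false; [reflexivity|].
      symmetry; apply Nat.leb_gt; lia. }
  apply rsR_ext. intros j hj. unfold tt, a.
  destruct j as [|i].
  - replace (0 <=? k)%nat with true by (symmetry; apply Nat.leb_le; lia).
    rewrite !qbinom_n0 by auto. ring.
  - destruct (Nat.eq_dec i k) as [->|hik].
    + replace (S k <=? k)%nat with false by (symmetry; apply Nat.leb_gt; lia).
      replace (k <=? k)%nat with true by (symmetry; apply Nat.leb_le; lia).
      rewrite Nat.sub_diag. replace (S k - k)%nat with 1%nat by lia.
      rewrite !qbinom_nn by auto. simpl binom. rewrite Nat.mul_0_r. simpl. ring.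
    + assert (hd : exists d, k = (i + S d)%nat) by (exists (k - S i)%nat; lia).
      destruct hd as [d ->].
      replace (S i <=? i + S d)%nat with true by (symmetry; apply Nat.leb_le; lia).
      replace (i <=? i + S d)%nat with true by (symmetry; apply Nat.leb_le; lia).
      replace (S (i + S d) - S i)%nat with (S d) by lia.
      replace (S (i + S d) - i)%nat with (S (S d)) by lia.
      rewrite (binom_S2 (S d)), Nat.mul_add_distr_l, pow_add, (pow_mult q m (S d)).
      rewrite qpascal by auto.
      rewrite <- (tech_pow_Rmult (-1) (S d)). ring.
Qed.

Definition xx q m r j := qnumC q (Cadd (RtoC (INR (j * m))) r).
Definition G q m r n k := rs k (fun j => Cmul (RtoC (cc q m k j)) (Cpow (xx q m r j) n)).

Lemma alg (c c' A Pj Pk Pk1 Q : Cplx) :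
  Cmul Pk c = Cmul (Cmul A c') (Csub Pk1 Pj) ->
  Cmul c' (Cmul A (Csub C1 (Cmul Pj Q))) =
  Cadd (Cmul (Cmul Pk Q) c) (Cmul (Cmul A (Csub C1 (Cmul Pk1 Q))) c').
Proof.
  intros H. replace (Cmul (Cmul Pk Q) c) with (Cmul Q (Cmul Pk c)) by ring.
  rewrite H. ring.
Qed.

Lemma key_C q m r j k : 0 < q -> q <> 1 -> (0 < m)%nat -> (j <= k)%nat ->
  Cmul (RtoC (cc q m (S k) j)) (xx q m r j) =
  Cadd (Cmul (qpow q (Cadd (RtoC (INR (m * k))) r)) (RtoC (cc q m k j)))
       (Cmul (xx q m r (S k)) (RtoC (cc q m (S k) j))).
Proof.
  intros hq hq1 hm hjk.
  destruct (Nat.le_exists_sub j k hjk) as [d [-> _]].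
  rewrite (Nat.add_comm d j).
  unfold xx. rewrite !qnum_shift, qpow_shift by auto.
  apply alg.
  pose proof (key_real q m j d hq hq1 hm) as H.
  rewrite <- !RtoC_mul, <- RtoC_sub, <- RtoC_mul. f_equal. rewrite <- H. ring.
Qed.

Lemma RHS_G q m r n k :
  Cmul (RtoC (1 / (qfact (q ^ m) k * (qint q m) ^ k)))
    (Csum_upto k (fun j =>
       Cmul (RtoC ((-1) ^ (k - j) * q ^ (m * binom (k - j) 2)
                   * qbinom (q ^ m) k j))
            (Cpow (qnumC q (Cadd (RtoC (INR (j * m))) r)) n))) = G q m r n k.
Proof.
  rewrite Csum_rs, <- rs_scal. unfold G. apply rs_ext. intros j _.
  unfold cc, xx. rewrite (RtoC_mul (1 / _)). ring.
Qed.

Lemma G00 q m r : G q m r 0 0 = C1.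
Proof.
  unfold G, cc, qbinom. simpl. rewrite Nat.mul_0_r. simpl.
  replace (1 / (1 * 1) * (1 * 1 * (1 / (1 * 1)))) with 1 by field.
  unfold Cmul, RtoC, C1; simpl. apply pair_equal_spec; split; ring.
Qed.

Lemma G0S q m r k : 0 < q -> q <> 1 -> (0 < m)%nat -> G q m r 0 (S k) = C0.
Proof.
  intros hq hq1 hm. unfold G.
  transitivity (rs (S k) (fun j => RtoC (cc q m (S k) j))).
  { apply rs_ext. intros j _. simpl Cpow. ring. }
  rewrite rs_RtoC. unfold cc. fold (tt q m (S k)).
  rewrite rsR_scal. replace (rsR (S k) _) with 0.
  - rewrite Rmult_0_r. reflexivity.
  - symmetry; apply tsum_zero; auto.
Qed.

Lemma GS0 q m r n : G q m r (S n) 0 = Cmul (xx q m r 0) (G q m r n 0).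
Proof. unfold G. cbn [rs Cpow]. ring. Qed.

Lemma GSS q m r n k : 0 < q -> q <> 1 -> (0 < m)%nat ->
  G q m r (S n) (S k) =
  Cadd (Cmul (qpow q (Cadd (RtoC (INR (m * k))) r)) (G q m r n k))
       (Cmul (xx q m r (S k)) (G q m r n (S k))).
Proof.
  intros hq hq1 hm. unfold G. cbn [rs].
  set (qp := qpow q (Cadd (RtoC (INR (m * k))) r)).
  set (xk := xx q m r (S k)).
  assert (H1 : rs k (fun j => Cmul (RtoC (cc q m (S k) j)) (Cpow (xx q m r j) (S n))) =
    Cadd (Cmul qp (rs k (fun j => Cmul (RtoC (cc q m k j)) (Cpow (xx q m r j) n))))
         (Cmul xk (rs k (fun j => Cmul (RtoC (cc q m (S k) j)) (Cpow (xx q m r j) n))))).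
  { rewrite <- !rs_scal, <- rs_add. apply rs_ext. intros j hj. cbn [Cpow].
    transitivity (Cmul (Cmul (RtoC (cc q m (S k) j)) (xx q m r j)) (Cpow (xx q m r j) n)).
    { ring. }
    unfold qp, xk. rewrite key_C by auto. ring. }
  rewrite H1. cbn [Cpow]. unfold xk. ring.
Qed.

Lemma W_unfold q m r n k : W q m r n k =
  if Nat.ltb n k then C0 else
  match n with
  | O => C1
  | S n' =>
    match k with
    | O => Cmul (qnumC q r) (W q m r n' O)
    | S k' =>
      Cadd (Cmul (qpow q (Cadd (RtoC (INR (m * k'))) r)) (W q m r n' k'))
           (Cmul (qnumC q (Cadd (RtoC (INR (m * k))) r)) (W q m r n' k))
    end
  end.
Proof. destruct n; reflexivity. Qed.

Lemma W_lt q m r n k : (n < k)%nat -> W q m r n k = C0.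
Proof.
  intros h. rewrite W_unfold. replace (Nat.ltb n k) with true; [reflexivity|].
  symmetry; apply Nat.ltb_lt; exact h.
Qed.

Lemma W_SS q m r n k : W q m r (S n) (S k) =
  Cadd (Cmul (qpow q (Cadd (RtoC (INR (m * k))) r)) (W q m r n k))
       (Cmul (qnumC q (Cadd (RtoC (INR (m * S k))) r)) (W q m r n (S k))).
Proof.
  destruct (Nat.ltb_spec (S n) (S k)) as [h|h].
  - rewrite !W_lt by lia. ring.
  - rewrite W_unfold. replace (Nat.ltb (S n) (S k)) with false; [reflexivity|].
    symmetry; apply Nat.ltb_ge; exact h.
Qed.

Lemma xx0 q m r : xx q m r 0 = qnumC q r.
Proof.
  unfold xx. f_equal. destruct r as [a b]. unfold Cadd, RtoC; simpl.
  apply pair_equal_spec; split; ring.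
Qed.

Theorem theorem3 (q : R) (m : nat) (r : Cplx)
  (hq : 0 < q) (hq1 : q <> 1) (hm : (0 < m)%nat) (n k : nat) :
  W q m r n k =
  Cmul (RtoC (1 / (qfact (q ^ m) k * (qint q m) ^ k)))
    (Csum_upto k (fun j =>
       Cmul (RtoC ((-1) ^ (k - j) * q ^ (m * binom (k - j) 2)
                   * qbinom (q ^ m) k j))
            (Cpow (qnumC q (Cadd (RtoC (INR (j * m))) r)) n))).
Proof.
  rewrite RHS_G. revert k. induction n as [|n IH]; intros k.
  - destruct k.
    + rewrite G00. reflexivity.
    + rewrite G0S by auto. reflexivity.
  - destruct k.
    + rewrite GS0, <- IH, xx0. reflexivity.
    + rewrite W_SS, GSS by auto. rewrite <- !IH. unfold xx.
      rewrite (Nat.mul_comm (S k) m). reflexivity.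
Qed.
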